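(* Let $F=F_+\tilde{*}F_-$ be a twisted plumbing along $U$ with defect $m\ge1$, with pinch points $x=\{x_1,\dots,x_m\}$. Suppose every component $U_0$ of $(U\cap Q)\setminus x$, having $k$ points of $x$ on its boundary, satisfies: $|\partial U_0\cap L|\equiv k\pmod 2$; $|\partial U_0\cap L|\ge 3$ if $k=1$; and $|\partial U_0\cap L|\ge 2$ if $k=2$. Then $|\partial U\cap L|\ge 2m+4$.
   Context: Let $F$ be a spanning surface for a link $L\subset S^3$ (compact surface, orientable or not, no closed components, $\partial F=L$). Twisted plumbing: let $Q\subset S^3$ be a 2-sphere with regular neighborhood $\nu Q\cong Q\times[-1,1]$, $Q=Q\times\{0\}$, projection $\pi_Q:\nu Q\to Q$. Let $H_\pm$ be the components of $S^3\setminus\nu Q$, $B_\pm=H_\pm\cup\nu Q$, $F_\pm=F\cap B_\pm$, and $U=F\cap\nu Q$. Isotope $F$ near $U$ so that for each $y\in Q$ the fiber $\pi_Q^{-1}(y)$ either meets $F$ transversely or meets $F$ in a properly embedded arc of $F$, minimizing the number $m$ of points $x_1,\dots,x_m\in Q$ over which the fiber is not transverse to $U$; then, fixing $F\cap\pi_Q^{-1}(x)$, isotope $F$ near $U$ so that $U\cap Q$ is a pinched disk whose pinch points are $x=\{x_1,\dots,x_m\}$. Then $F=F_+\tilde{*}F_-$ is a twisted plumbing along $U$ with defect $m$; $Q$ cut along $U\cap Q$ is the twisted plumbing cap $V$, and $U$ (identified with $U\cap Q$) is its shadow; $\partial U\cap L$ means the points of $L$ on the boundary of the pinched disk $U\cap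 Q$. *)

(* Defs.v *)
(* Combinatorial-geometric model of the shadow
   U ∩ Q of a twisted plumbing: a closed unit disk in R^2 in which m
   pairwise disjoint chords are collapsed to the pinch points x_1..x_m. *)
From HB Require Import structures.
From mathcomp Require Import all_boot all_order all_algebra.
From mathcomp Require Import all_classical all_reals all_analysis.
Set Implicit Arguments. Unset Strict Implicit. Unset Printing Implicit Defensive.
Import Order.TTheory GRing.Theory Num.Theory.
Import numFieldNormedType.Exports.
Local Open Scope classical_set_scope.
Local Open Scope ring_scope.

Section PinchedDisk.
Variable R : realType.

Definition unit_disk : set (R * R) := [set p | p.1 ^+ 2 + p.2 ^+ 2 <= 1].
Definition unit_circle : set (R * R) := [set p | p.1 ^+ 2 + p.2 ^+ 2 = 1].

Definition segment (a b : R * R) : set (R * R) :=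
  [set p | exists2 t : R, 0 <= t <= 1 &
     p = ((1 - t) * a.1 + t * b.1, (1 - t) * a.2 + t * b.2)].

Definition pinch_data (m : nat) (a b : 'I_m -> R * R) : Prop :=
  (forall i, a i != b i /\ unit_circle (a i) /\ unit_circle (b i)) /\
  (forall i j, i != j -> segment (a i) (b i) `&` segment (a j) (b j) = set0).

(* The pinched disk minus its pinch points, pulled back to the disk. *)
Definition pinched_complement (m : nat) (a b : 'I_m -> R * R) : set (R * R) :=
  unit_disk `\` \bigcup_(i in [set: 'I_m]) segment (a i) (b i).

Definition boundary_link_points (m : nat) (a b : 'I_m -> R * R)
    (Lp : seq (R * R)) : Prop :=
  uniq Lp /\ (forall q, q \in Lp -> unit_circle q /\
     forall i, ~ segment (a i) (b i) q).

(* For the component U0 = connected_component W p of W = pinched_complement: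
   number of pinch points on its boundary (chords in its closure) *)
Definition comp_pinch_count (m : nat) (a b : 'I_m -> R * R) (U0 : set (R * R))
  : nat := count (fun i => `[< segment (a i) (b i) `<=` closure U0 >]) (enum 'I_m).

Definition comp_link_count (Lp : seq (R * R)) (U0 : set (R * R)) : nat :=
  count (fun q => q \in closure U0) Lp.

End PinchedDisk.

(* Main.v *)
Require Import Defs.
From HB Require Import structures.
From mathcomp Require Import all_boot all_order all_algebra.
From mathcomp Require Import all_classical all_reals all_analysis.
From mathcomp Require Import ring lra zify.
Import Order.TTheory GRing.Theory Num.Theory.
Import numFieldNormedType.Exports.
Local Open Scope classical_set_scope.
Local Open Scope ring_scope.
Lemma forest m (T : {set {ffun 'I_m -> bool}}) (u v : 'I_m -> {ffun 'I_m -> bool}) :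
  T != finset.set0 -> (forall i, u i \in T) -> (forall i, v i \in T) ->
  (forall i, u i i != v i i) -> (forall i j, j != i -> u i j = v i j) -> (m < #|T|)%N.
Proof.
move=> T0 uT vT Hne Huv.
pose proj (k : nat) (s : {ffun 'I_m -> bool}) := [ffun j : 'I_m => (j < k)%N && s j].
suff H : forall k, (k <= m)%N -> (k < #|proj k @: T|)%N.
  exact: leq_trans (H m (leqnn m)) (leq_imset_card _ _).
elim => [_|k IH km].
  rewrite card_gt0; apply/set0Pn; have/set0Pn[x xT] := T0; exists (proj 0%N x); exact: imset_f.
set i := Ordinal km.
have E : proj k @: T = proj k @: (proj k.+1 @: T).
  rewrite -imset_comp; apply: eq_imset => s /=; apply/ffunP => j; rewrite !ffunE.
  by case: (ltnP j k) => //= h; rewrite ltnS (ltnW h).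
have := IH (ltnW km); rewrite E => h1.
have h2 : (#|proj k @: (proj k.+1 @: T)| < #|proj k.+1 @: T|)%N.
  rewrite ltn_neqAle leq_imset_card andbT; apply/negP => /imset_injP inj.
  have hu : proj k.+1 (u i) \in proj k.+1 @: T by exact: imset_f.
  have hv : proj k.+1 (v i) \in proj k.+1 @: T by exact: imset_f.
  have e : proj k (proj k.+1 (u i)) = proj k (proj k.+1 (v i)).
    apply/ffunP => j; rewrite !ffunE; case: (ltnP j k) => //= h.
    rewrite ltnS (ltnW h) /=; apply: Huv; apply/negP => /eqP ji.
    by move: h; rewrite ji /= ltnn.
  move: (inj _ _ hu hv e) => /ffunP /(_ i); rewrite !ffunE /= ltnSn /= => /eqP.
  by rewrite (negbTE (Hne i)).
exact: leq_ltn_trans h1 h2.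
Qed.

Section S.
Variable R : realType.
Definition mix (p q : R * R) (t : R) : R * R :=
  ((1 - t) * p.1 + t * q.1, (1 - t) * p.2 + t * q.2).
Definition sdf (a b q : R * R) : R :=
  (b.1 - a.1) * (q.2 - a.2) - (b.2 - a.2) * (q.1 - a.1).

Lemma sdf_mix a b p q t : sdf a b (mix p q t) = (1 - t) * sdf a b p + t * sdf a b q.
Proof. rewrite /sdf /mix /=; ring. Qed.

Lemma disk_mix (p q : R * R) t : unit_disk p -> unit_disk q -> 0 <= t <= 1 -> unit_disk (mix p q t).
Proof.
rewrite /unit_disk /mix /= => hp hq /andP[t0 t1].
have h1 : 0 <= t * (1 - t) by apply: mulr_ge0; lra.
have h2 : 2 * (p.1 * q.1 + p.2 * q.2) <= p.1 ^+ 2 + p.2 ^+ 2 + q.1 ^+ 2 + q.2 ^+ 2.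
  have : 0 <= (p.1 - q.1) ^+ 2 + (p.2 - q.2) ^+ 2 by rewrite addr_ge0 // sqr_ge0.
  move=> h; nra.
nra.
Qed.

Lemma seg_sdf (a b q : R * R) : segment a b q -> sdf a b q = 0.
Proof. by case=> t _ ->; rewrite /sdf /=; ring. Qed.

Lemma circle_disk (p : R * R) : unit_circle p -> unit_disk p.
Proof. by rewrite /unit_circle /unit_disk /= => ->. Qed.

Lemma seg_disk (a b q : R * R) : unit_circle a -> unit_circle b -> segment a b q -> unit_disk q.
Proof.
move=> /circle_disk ha /circle_disk hb [t ht ->]; exact: disk_mix.
Qed.

Lemma sdf0_seg (a b q : R * R) : a != b -> unit_circle a -> unit_circle b -> unit_disk q ->
  sdf a b q = 0 -> segment a b q.
Proof.
case: a b q => [a1 a2] [b1 b2] [q1 q2] ab.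
rewrite /unit_circle /unit_disk /sdf /= => ha hb hq hs.
set D := (b1 - a1) ^+ 2 + (b2 - a2) ^+ 2.
have D0 : 0 < D.
  rewrite lt0r addr_ge0 ?sqr_ge0 // andbT; apply/negP => /eqP.
  move/eqP; rewrite paddr_eq0 ?sqr_ge0 // !sqrf_eq0 !subr_eq0 => /andP[/eqP e1 /eqP e2].
  by move: ab; rewrite e1 e2 eqxx.
set t := ((b1 - a1) * (q1 - a1) + (b2 - a2) * (q2 - a2)) / D.
have e1 : q1 = a1 + t * (b1 - a1).
  have -> : t * (b1 - a1) = ((b1 - a1) * (q1 - a1) + (b2 - a2) * (q2 - a2)) * (b1 - a1) / D.
    by rewrite /t mulrAC.
  apply: (@mulIf _ D); first by rewrite gt_eqF.
  rewrite mulrDl divfK ?gt_eqF // /D; apply/eqP; rewrite -subr_eq0.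
  have -> : q1 * ((b1 - a1) ^+ 2 + (b2 - a2) ^+ 2) - (a1 * ((b1 - a1) ^+ 2 + (b2 - a2) ^+ 2) +
   ((b1 - a1) * (q1 - a1) + (b2 - a2) * (q2 - a2)) * (b1 - a1)) = - (b2 - a2) * ((b1 - a1) * (q2 - a2) - (b2 - a2) * (q1 - a1)) by ring.
  by rewrite hs mulr0.
have e2 : q2 = a2 + t * (b2 - a2).
  have -> : t * (b2 - a2) = ((b1 - a1) * (q1 - a1) + (b2 - a2) * (q2 - a2)) * (b2 - a2) / D.
    by rewrite /t mulrAC.
  apply: (@mulIf _ D); first by rewrite gt_eqF.
  rewrite mulrDl divfK ?gt_eqF // /D; apply/eqP; rewrite -subr_eq0.
  have -> : q2 * ((b1 - a1) ^+ 2 + (b2 - a2) ^+ 2) - (a2 * ((b1 - a1) ^+ 2 + (b2 - a2) ^+ 2) +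
   ((b1 - a1) * (q1 - a1) + (b2 - a2) * (q2 - a2)) * (b2 - a2)) = (b1 - a1) * ((b1 - a1) * (q2 - a2) - (b2 - a2) * (q1 - a1)) by ring.
  by rewrite hs mulr0.
have hq' : 1 + D * (t ^+ 2 - t) <= 1.
  move: hq; rewrite e1 e2 /D; nra.
have tt : t ^+ 2 - t <= 0.
  have h : D * (t ^+ 2 - t) <= 0 by lra.
  by rewrite -(pmulr_rle0 _ D0).
exists t; first by apply/andP; split; nra.
by rewrite /= e1 e2; congr (_, _); ring.
Qed.

Lemma mix_cont (p q : R * R) : continuous (mix p q).
Proof.
have H : forall u v : R, continuous (fun t : R => (1 - t) * u + t * v).
  move=> u v s; apply: cvgD; [apply: cvgMl; apply: cvgB; [exact: cvg_cst|exact: cvg_id]|apply: cvgMl; exact: cvg_id].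
move=> t; apply: (@cvg_pair _ _ _ _ (nbhs _) (nbhs _)); exact: H.
Qed.

Lemma sdf_cont (a b : R * R) : continuous (sdf a b).
Proof.
move=> x; apply: cvgB; apply: cvgMr; apply: cvgB; try exact: cvg_cst.
exact: (@cvg_snd _ _ (nbhs x.1) (nbhs x.2)).
exact: (@cvg_fst _ _ (nbhs x.1) (nbhs x.2)).
Qed.

Lemma near_pos (T : topologicalType) (f : T -> R) x : continuous f -> 0 < f x ->
  \forall y \near x, 0 < f y.
Proof. move=> cf fx; apply: (cf x [set y | 0 < y]); exact: open_gt. Qed.

Lemma near_neg (T : topologicalType) (f : T -> R) x : continuous f -> f x < 0 ->
  \forall y \near x, f y < 0.
Proof. move=> cf fx; apply: (cf x [set y | y < 0]); exact: open_lt. Qed.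

Lemma near0_pos (P : R -> Prop) : (\forall x \near (0 : R), P x) -> exists2 d, 0 < d & P d.
Proof.
move=> /nbhs_ballP [e /= e0 H]; exists (e / 2); first by rewrite divr_gt0.
apply: H; rewrite /ball /= sub0r normrN gtr0_norm ?divr_gt0 //.
by rewrite ltr_pdivrMr // ltr_pMr // ltr1n.
Qed.

Lemma quad_near (al be ga : R) : 0 < al -> \forall d \near (0 : R), 0 < al + be * d + ga * d ^+ 2.
Proof.
move=> a0; apply: near_pos => //; last by rewrite expr0n /= !mulr0 !addr0.
move=> x; apply: cvgD; first apply: cvgD.
- exact: cvg_cst.
- apply: cvgMr; exact: cvg_id.
- apply: cvgMr; exact: (@exprn_continuous R 2 x).
Qed.


Lemma same_sign_mix (x y t : R) : x != 0 -> y != 0 -> (0 < x) = (0 < y) -> 0 <= t <= 1 ->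
  ((1 - t) * x + t * y != 0) /\ ((0 < (1 - t) * x + t * y) = (0 < x)).
Proof.
move=> x0 y0 xy /andP[t0 t1].
have [xp|xn] := ltrP 0 x.
  have yp : 0 < y by rewrite -xy.
  have : 0 < (1 - t) * x + t * y by nra.
  by move=> h; rewrite gt_eqF // h.
have xn' : x < 0 by rewrite lt_neqAle x0 xn.
have yn : y < 0.
  have : ~~ (0 < y) by rewrite -xy -leNgt.
  by rewrite -leNgt le_eqVlt (negbTE y0).
have : (1 - t) * x + t * y < 0 by nra.
by move=> h; rewrite lt_eqF // ltNge ltW.
Qed.

Variable m : nat.
Variables a b : 'I_m -> R * R.
Hypothesis Hpd : pinch_data a b.

Definition sd i q := sdf (a i) (b i) q.
Definition W := pinched_complement a b.

Lemma Hab i : a i != b i. Proof. by case: (proj1 Hpd i). Qed.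
Lemma Hca i : unit_circle (a i). Proof. by case: (proj1 Hpd i) => _ []. Qed.
Lemma Hcb i : unit_circle (b i). Proof. by case: (proj1 Hpd i) => _ []. Qed.

Lemma W_iff q : W q <-> unit_disk q /\ forall j, sd j q != 0.
Proof.
split.
  move=> [dq nq]; split => // j; apply/eqP => /(sdf0_seg _ _ _ (Hab j) (Hca j) (Hcb j) dq) sj.
  by apply: nq; exists j.
move=> [dq nq]; split => // -[j _ /seg_sdf]; apply/eqP; exact: nq.
Qed.

Lemma seg_other i j q : i != j -> segment (a i) (b i) q -> sd j q != 0.
Proof.
move=> ij sq; apply/eqP => /(sdf0_seg _ _ _ (Hab j) (Hca j) (Hcb j) (seg_disk _ _ _ (Hca i) (Hcb i) sq)) sj.
have : (segment (a i) (b i) `&` segment (a j) (b j)) q by [].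
by rewrite (proj2 Hpd i j ij).
Qed.


Definition mid i := mix (a i) (b i) (1 / 2).

Lemma seg_mix i t : 0 <= t <= 1 -> segment (a i) (b i) (mix (a i) (b i) t).
Proof. by move=> ht; exists t. Qed.

Lemma mix0 (p q : R * R) : mix p q 0 = p.
Proof. by case: p => p1 p2; rewrite /mix /= subr0 !mul1r !mul0r !addr0. Qed.
Lemma mix1 (p q : R * R) : mix p q 1 = q.
Proof. by case: q => q1 q2; rewrite /mix /= subrr !mul1r !mul0r !add0r. Qed.

Lemma end_sign i j : i != j -> (0 < sd j (a i)) = (0 < sd j (b i)).
Proof.
move=> ij.
have ha : sd j (a i) != 0.
  apply: (@seg_other i j (a i) ij); rewrite -{2}[a i](mix0 _ (b i)); apply: seg_mix; by rewrite lexx ler01.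
have hb : sd j (b i) != 0.
  apply: (@seg_other i j (b i) ij); rewrite -{2}[b i](mix1 (a i)); apply: seg_mix; by rewrite lexx ler01.
set al := sd j (a i) in ha *; set be := sd j (b i) in hb *.
have key : forall x y : R, x != 0 -> y != 0 -> 0 < x -> y < 0 ->
    exists2 t, 0 <= t <= 1 & (1 - t) * x + t * y = 0.
  move=> x y _ _ xp yn; have xy : 0 < x - y by lra.
  exists (x / (x - y)).
    by apply/andP; split; [rewrite divr_ge0 // ltW|rewrite ler_pdivrMr // mul1r; lra].
  have -> : (1 - x / (x - y)) * x + x / (x - y) * y = x - x / (x - y) * (x - y) by ring.
  by rewrite divfK ?subrr // gt_eqF.
have zero : forall t, 0 <= t <= 1 -> (1 - t) * al + t * be != 0.
  by move=> t ht; have := @seg_other i j _ ij (seg_mix i t ht); rewrite /sd sdf_mix.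
have [ap|an] := ltrP 0 al.
  have [bp|bn] := ltrP 0 be; first by [].
  have bn' : be < 0 by rewrite lt_neqAle hb bn.
  by have [t ht /eqP] := key _ _ ha hb ap bn'; rewrite (negbTE (zero t ht)).
have an' : al < 0 by rewrite lt_neqAle ha an.
have [bp|bn] := ltrP 0 be; last by [].
have [t ht /eqP] := key _ _ hb ha bp an'.
have -> : (1 - t) * be + t * al = (1 - (1 - t)) * al + (1 - t) * be by ring.
have ht' : 0 <= 1 - t <= 1 by case/andP: ht => h1 h2; apply/andP; split; lra.
by rewrite (negbTE (zero _ ht')).
Qed.

Lemma chord_sign i j t : i != j -> 0 <= t <= 1 ->
  (0 < sd j (mix (a i) (b i) t)) = (0 < sd j (mid i)).
Proof.
move=> ij ht.
have ha : sd j (a i) != 0.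
  apply: (@seg_other i j (a i) ij); rewrite -{2}[a i](mix0 _ (b i)); apply: seg_mix; by rewrite lexx ler01.
have hb : sd j (b i) != 0.
  apply: (@seg_other i j (b i) ij); rewrite -{2}[b i](mix1 (a i)); apply: seg_mix; by rewrite lexx ler01.
have hm : (0 : R) <= (1 / 2 : R) <= 1 by lra.
rewrite /mid /sd !sdf_mix -!/(sd j _).
rewrite (proj2 (same_sign_mix _ _ _ ha hb (end_sign _ _ ij) ht)).
by rewrite (proj2 (same_sign_mix _ _ _ ha hb (end_sign _ _ ij) hm)).
Qed.


Definition sgv (q : R * R) : {ffun 'I_m -> bool} := [ffun j => 0 < sd j q].
Definition cell (s : {ffun 'I_m -> bool}) : set (R * R) := [set q | W q /\ sgv q = s].

Lemma cell_mix s p q t : cell s p -> cell s q -> 0 <= t <= 1 -> cell s (mix p q t).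
Proof.
move=> [/W_iff [dp np] sp] [/W_iff [dq nq] sq] ht; split.
  apply/W_iff; split; first exact: disk_mix.
  move=> j; rewrite /sd sdf_mix; apply: (proj1 (same_sign_mix _ _ _ (np j) (nq j) _ ht)).
  by move/ffunP: sp => /(_ j); move/ffunP: sq => /(_ j); rewrite !ffunE => -> ->.
rewrite -sp; apply/ffunP => j; rewrite !ffunE /sd sdf_mix.
apply: (proj2 (same_sign_mix _ _ _ (np j) (nq j) _ ht)).
by move/ffunP: sp => /(_ j); move/ffunP: sq => /(_ j); rewrite !ffunE => -> ->.
Qed.

Lemma cell_connected s : connected (cell s).
Proof.
have [[p cp]|c0] := pselect (cell s !=set0); last first.
  have -> : cell s = set0 by apply/seteqP; split => // x cx; apply: c0; exists x.
  exact: connected0.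
have -> : cell s = \bigcup_(q in cell s) (mix p q @` `[0, 1]).
  apply/seteqP; split => [q cq|q [r cr [t ht <-]]].
    exists q => //; exists 1; last exact: mix1.
    by rewrite set_itvE /= lexx ler01.
  apply: cell_mix => //; move: ht; rewrite set_itvE /=; done.
apply: bigcup_connected.
  exists p => q cq; exists 0; last exact: mix0.
  by rewrite set_itvE /= lexx ler01.
move=> q cq; apply: connected_continuous_connected; first exact: segment_connected.
apply: continuous_subspaceT; exact: mix_cont.
Qed.


Lemma nbhs_sd j x : sd j x != 0 -> \forall y \near x, (0 < sd j y) = (0 < sd j x).
Proof.
move=> nz; have [h|h] := ltrP 0 (sd j x).
  by apply: filterS (near_pos _ _ _ (sdf_cont (a j) (b j)) h) => y ->.
have h' : sd j x < 0 by rewrite lt_neqAle nz h.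
apply: filterS (near_neg _ _ _ (sdf_cont (a j) (b j)) h') => y hy.
by rewrite ltNge ltW.
Qed.

Lemma cl_sgv_j s y j : closure (cell s) y -> sd j y != 0 -> s j = (0 < sd j y).
Proof.
move=> cy nz; have [z [[Wz sz] ez]] := cy _ (nbhs_sd _ _ nz).
by rewrite -sz ffunE.
Qed.

Lemma cl_sgv s y : closure (cell s) y -> (forall j, sd j y != 0) -> s = sgv y.
Proof. by move=> cy nz; apply/ffunP => j; rewrite ffunE; exact: cl_sgv_j. Qed.

Lemma comp_cell p : W p -> connected_component W p = cell (sgv p).
Proof.
move=> Wp; apply/seteqP; split; last first.
  apply: connected_component_max => //; [by move=> q []| exact: cell_connected].
have sep : separated (cell (sgv p)) (W `\` cell (sgv p)).
  split.
  - apply/seteqP; split => // y [cy [Wy ny]]; apply: ny; split => //.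
    by apply/esym/cl_sgv => //; exact: (proj2 (proj1 (W_iff y) Wy)).
  - apply/seteqP; split => // y [[Wy sy] cy].
    have nz := proj2 (proj1 (W_iff y) Wy).
    have := cy _ (@filter_forall _ _ (fun j z => (0 < sd j z) = (0 < sd j y)) _ _
       (fun j => nbhs_sd _ _ (nz j))).
    move=> [z [[Wz nc] ez]]; apply: nc; split => //.
    by rewrite -sy; apply/ffunP => j; rewrite !ffunE ez.
have sub : connected_component W p `<=` cell (sgv p) `|` (W `\` cell (sgv p)).
  move=> z /connected_component_sub Wz.
  by case: (pselect (cell (sgv p) z)) => h; [left|right].
case: (connected_subset sep sub (@component_connected _ W p)) => // h.
by have [_ []] := h p (connected_component_refl Wp).

Qed.


Definition tp i : {ffun 'I_m -> bool} := [ffun j => if j == i then true else 0 < sd j (mid i)].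
Definition tm i : {ffun 'I_m -> bool} := [ffun j => if j == i then false else 0 < sd j (mid i)].
Definition Dl i := ((b i).1 - (a i).1) ^+ 2 + ((b i).2 - (a i).2) ^+ 2.
Definition pt i (d : R) : R * R :=
  ((mid i).1 - d * ((b i).2 - (a i).2), (mid i).2 + d * ((b i).1 - (a i).1)).
Definition kap j i := ((b j).1 - (a j).1) * ((b i).1 - (a i).1) + ((b j).2 - (a j).2) * ((b i).2 - (a i).2).

Lemma Dl_pos i : 0 < Dl i.
Proof.
rewrite /Dl; have := Hab i; case: (a i) (b i) => [a1 a2] [b1 b2] ab /=.
rewrite lt0r addr_ge0 ?sqr_ge0 // andbT; apply/negP => /eqP.
move/eqP; rewrite paddr_eq0 ?sqr_ge0 // !sqrf_eq0 !subr_eq0 => /andP[/eqP e1 /eqP e2].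
by move: ab; rewrite e1 e2 eqxx.
Qed.

Lemma sd_pt_i i d : sd i (pt i d) = d * Dl i.
Proof. rewrite /sd /sdf /pt /mid /mix /Dl /=; ring. Qed.

Lemma sd_pt_j j i d : sd j (pt i d) = sd j (mid i) + kap j i * d.
Proof. rewrite /sd /sdf /pt /kap /=; ring. Qed.

Lemma mid_in i : 1 - ((mid i).1 ^+ 2 + (mid i).2 ^+ 2) > 0.
Proof.
have := Dl_pos i; have := Hca i; have := Hcb i.
rewrite /unit_circle /mid /mix /Dl /=.
case: (a i) (b i) => [a1 a2] [b1 b2] /= hb ha hD.
have -> : 1 - (((1 - 1 / 2) * a1 + 1 / 2 * b1) ^+ 2 + ((1 - 1 / 2) * a2 + 1 / 2 * b2) ^+ 2) =
  ((b1 - a1) ^+ 2 + (b2 - a2) ^+ 2) / 4 + (1 - (a1 ^+ 2 + a2 ^+ 2)) / 2 + (1 - (b1 ^+ 2 + b2 ^+ 2)) / 2 :> R.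
  by field.
rewrite ha hb !subrr !mul0r !addr0; lra.
Qed.

Lemma disk_pt i d : 1 - ((pt i d).1 ^+ 2 + (pt i d).2 ^+ 2) =
  (1 - ((mid i).1 ^+ 2 + (mid i).2 ^+ 2))
  + (- 2 * ((mid i).2 * ((b i).1 - (a i).1) - (mid i).1 * ((b i).2 - (a i).2))) * d
  + (- Dl i) * d ^+ 2.
Proof. rewrite /pt /Dl /=; ring. Qed.

Lemma near_lin (s k : R) : s != 0 -> \forall d \near (0 : R),
  (0 < s -> 0 < s + k * d /\ 0 < s + k * - d) /\ (s < 0 -> s + k * d < 0 /\ s + k * - d < 0).
Proof.
move=> s0; have [sp|sn] := ltrP 0 s.
  apply: filterS (filterI (quad_near s k 0 sp) (quad_near s (- k) 0 sp)).
  move=> d [h1 h2]; split => [_|]; last by rewrite ltNge ltW.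
  rewrite !mul0r !addr0 in h1 h2; split; lra.
have sn' : 0 < - s by rewrite oppr_gt0 lt_neqAle s0 sn.
apply: filterS (filterI (quad_near (- s) (- k) 0 sn') (quad_near (- s) k 0 sn')).
move=> d [h1 h2]; split => [//|_].
rewrite !mul0r !addr0 in h1 h2; split; lra.
Qed.


Lemma mid_seg i : segment (a i) (b i) (mid i).
Proof. by apply: seg_mix; lra. Qed.

Lemma mid_nz i j : i != j -> sd j (mid i) != 0.
Proof. by move=> ij; exact: (seg_other _ _ _ ij (mid_seg i)). Qed.

Lemma cell_pts i : exists2 d, 0 < d & cell (tp i) (pt i d) /\ cell (tm i) (pt i (- d)).
Proof.
pose Q j d := j != i ->
  (0 < sd j (mid i) -> 0 < sd j (mid i) + kap j i * d /\ 0 < sd j (mid i) + kap j i * - d) /\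
  (sd j (mid i) < 0 -> sd j (mid i) + kap j i * d < 0 /\ sd j (mid i) + kap j i * - d < 0).
have HQ : \forall d \near (0 : R), forall j, Q j d.
  apply: (@filter_forall R _ Q (nbhs (0 : R))) => j; case: (eqVneq j i) => [->|ji].
    by apply: nearW => d; rewrite /Q eqxx.
  have ij : i != j by rewrite eq_sym.
  by apply: filterS (near_lin _ (kap j i) (mid_nz _ _ ij)) => d h _.
set be := - 2 * ((mid i).2 * ((b i).1 - (a i).1) - (mid i).1 * ((b i).2 - (a i).2)).
have HD1 := quad_near _ be (- Dl i) (mid_in i).
have HD2 := quad_near _ (- be) (- Dl i) (mid_in i).
have [d d0 [[H1 H2] H3]] := near0_pos _ (filterI (filterI HQ HD1) HD2).
have Dp := Dl_pos i.
have nz : forall j e, j != i -> Q j e -> sd j (pt i e) != 0 /\ (0 < sd j (pt i e)) = (0 < sd j (mid i)).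
  move=> j e ji [] // hp hn; rewrite sd_pt_j.
  have [h|h] := ltrP 0 (sd j (mid i)).
    by have := (hp h).1 => h'; rewrite gt_eqF // h'.
  have h' : sd j (mid i) < 0 by rewrite lt_neqAle h andbT mid_nz // eq_sym.
  have := (hn h').1 => h''; split; first by rewrite lt_eqF.
  by apply/negbTE; rewrite -leNgt ltW.
have Qm : forall j, Q j (- d).
  move=> j ji; rewrite opprK; have [h1 h2] := H1 j ji.
  by split => h; [have [] := h1 h|have [] := h2 h].
exists d => //; split; split.
- apply/W_iff; split.
    change ((pt i d).1 ^+ 2 + (pt i d).2 ^+ 2 <= 1); have := disk_pt i d; rewrite -/be; lra.
  move=> j; case: (eqVneq j i) => [->|ji].
    by rewrite sd_pt_i mulf_neq0 // gt_eqF.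
  exact: (nz j d ji (H1 j)).1.
- apply/ffunP => j; rewrite !ffunE; case: (eqVneq j i) => [->|ji].
    by rewrite sd_pt_i mulr_gt0.
  exact: (nz j d ji (H1 j)).2.
- apply/W_iff; split.
    change ((pt i (- d)).1 ^+ 2 + (pt i (- d)).2 ^+ 2 <= 1); have := disk_pt i (- d); rewrite -/be sqrrN; lra.
  move=> j; case: (eqVneq j i) => [->|ji].
    by rewrite sd_pt_i mulf_neq0 // ?oppr_eq0 gt_eqF.
  exact: (nz j _ ji (Qm j)).1.
- apply/ffunP => j; rewrite !ffunE; case: (eqVneq j i) => [->|ji].
    by rewrite sd_pt_i mulNr oppr_gt0 ltNge ltW // mulr_gt0.
  exact: (nz j _ ji (Qm j)).2.
Qed.


Lemma seg_cl i s c : cell s c -> (forall j, j != i -> s j = (0 < sd j (mid i))) ->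
  segment (a i) (b i) `<=` closure (cell s).
Proof.
move=> [Wc sc] hs q sq B nB.
have [t ht qE] := sq.
have dq := seg_disk _ _ _ (Hca i) (Hcb i) sq.
have [dc nc] := proj1 (W_iff c) Wc.
have HB : \forall e \near (0 : R), B (mix q c e).
  by apply: (mix_cont q c 0); rewrite mix0.
have [e e0 [Be e1]] := near0_pos _ (filterI HB (quad_near 1 (-1) 0 ltr01)).
have e1' : e <= 1 by move: e1; rewrite mul0r addr0; lra.
have he : 0 <= e <= 1 by rewrite (ltW e0) e1'.
have key : forall j, sd j (mix q c e) != 0 /\ (0 < sd j (mix q c e)) = s j.
  move=> j; rewrite /sd sdf_mix -/(sd j q) -/(sd j c).
  have scj : forall j, s j = (0 < sd j c) by move=> k; rewrite -sc ffunE.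
  case: (eqVneq j i) => [->|ji].
    rewrite [sd i q]seg_sdf // mulr0 add0r; split; first by apply: mulf_neq0; [rewrite gt_eqF | exact: nc i].
    by rewrite pmulr_rgt0 //; rewrite scj.
  have ij : i != j by rewrite eq_sym.
  have nq : sd j q != 0 := seg_other _ _ _ ij sq.
  have sqj : (0 < sd j q) = (0 < sd j c).
    by rewrite -scj hs // -(chord_sign _ _ _ ij ht) qE.
  have := same_sign_mix _ _ _ nq (nc j) sqj he.
  by move=> [h1 h2]; split => //; rewrite h2 sqj scj.
exists (mix q c e); split => //; split.
  by apply/W_iff; split; [exact: disk_mix | move=> j; exact: (key j).1].
by apply/ffunP => j; rewrite ffunE (key j).2.
Qed.

Lemma cl_seg_iff i s : segment (a i) (b i) `<=` closure (cell s) <-> (s = tp i \/ s = tm i).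
Proof.
split.
  move=> /(_ _ (mid_seg i)) cm.
  have hj : forall j, j != i -> s j = (0 < sd j (mid i)).
    by move=> j ji; apply: cl_sgv_j => //; apply: mid_nz; rewrite eq_sym.
  case si : (s i); [left|right]; apply/ffunP => j; rewrite ffunE;
    by case: (eqVneq j i) => [->|ji] //; rewrite hj.
have [d _ [cp cm]] := cell_pts i.
case=> ->; [apply: (seg_cl _ _ _ cp) | apply: (seg_cl _ _ _ cm)];
  by move=> j ji; rewrite ffunE (negbTE ji).
Qed.


Lemma count_sumE (T : Type) (p : pred T) s : count p s = (\sum_(x <- s) p x)%N.
Proof. elim: s => [|x s IH]; by rewrite ?big_nil ?big_cons //= IH. Qed.

Lemma sum_eq_le (S : {set {ffun 'I_m -> bool}}) x : (\sum_(s in S) (s == x) <= 1)%N.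
Proof.
case: (boolP (x \in S)) => h.
  by rewrite (bigD1 x) //= eqxx big1 // => s /andP[_ /negbTE ->].
by rewrite big1 // => s sS; case: eqP => // e; rewrite -e sS in h.
Qed.

Lemma sum_eq1 (S : {set {ffun 'I_m -> bool}}) x : x \in S -> (\sum_(s in S) (s == x) = 1)%N.
Proof. by move=> h; rewrite (bigD1 x) //= eqxx big1 // => s /andP[_ /negbTE ->]. Qed.

Lemma tp_tm_ne i : tp i != tm i.
Proof. by apply/negP => /eqP /ffunP /(_ i); rewrite !ffunE eqxx. Qed.

Lemma main (Lp : seq (R * R)) :
  (1 <= m)%N ->
  boundary_link_points a b Lp ->
  (forall p, pinched_complement a b p ->
     let U0 := connected_component (pinched_complement a b) p in
     let k := comp_pinch_count a b U0 in
     let n := comp_link_count Lp U0 in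
     [/\ n = k %[mod 2],
         k = 1%N -> (3 <= n)%N &
         k = 2%N -> (2 <= n)%N]) ->
  (2 * m + 4 <= size Lp)%N.
Proof.
move=> m1 [uLp hLp] H.
pose T := [set tp i | i in 'I_m] :|: [set tm i | i in 'I_m].
pose kk s := count (fun i => (s == tp i) || (s == tm i)) (enum 'I_m).
pose nn s := count (fun q => q \in closure (cell s)) Lp.
have tpT i : tp i \in T by rewrite inE; apply/orP; left; apply: imset_f.
have tmT i : tm i \in T by rewrite inE; apply/orP; right; apply: imset_f.
have cnt : forall s, s \in T -> (4 <= nn s + kk s)%N.
  move=> s sT.
  have [i si] : exists i, s = tp i \/ s = tm i.
    by move: sT; rewrite inE => /orP[] /imsetP[i _ ->]; exists i; [left|right].
  have [p cp] : exists p, cell s p.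
    have [d _ [c1 c2]] := cell_pts i.
    by case: si => ->; [exists (pt i d)|exists (pt i (- d))].
  have [Wp sp] := cp.
  have := H p Wp; rewrite /= comp_cell // sp.
  have -> : comp_pinch_count a b (cell s) = kk s.
    apply: eq_count => j /=.
    case: (asboolP (segment (a j) (b j) `<=` closure (cell s))) => h.
      by case: ((cl_seg_iff j s).1 h) => ->; rewrite eqxx ?orbT.
    apply/esym/negP => /orP hh; apply: h; apply/cl_seg_iff.
    by case: hh => /eqP ->; [left|right].
  have -> : comp_link_count Lp (cell s) = nn s by [].
  have k1 : (1 <= kk s)%N.
    rewrite lt0n -lt0n -has_count; apply/hasP; exists i; first exact: mem_enum.
    by case: si => ->; rewrite eqxx ?orbT.
  move=> [h1 h2 h3]; lia.
have WL : forall q, q \in Lp -> W q.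
  move=> q /hLp [cq nq]; split; first exact: circle_disk.
  by move=> [j _ sj]; exact: (nq j sj).
have A : (\sum_(s in T) kk s = 2 * m)%N.
  under eq_bigr => s _ do rewrite /kk count_sumE big_enum /=.
  rewrite exchange_big /=.
  rewrite (eq_bigr (fun _ => 2%N)).
    by rewrite sum_nat_const card_ord mulnC.
  move=> i _.
  rewrite (eq_bigr (fun s => (s == tp i) + (s == tm i))%N).
    by rewrite big_split /= !sum_eq1.
  move=> s _; case: eqP => [->|_] /=; last by rewrite add0n.
  by rewrite (negbTE (tp_tm_ne i)).
have B : (\sum_(s in T) nn s <= size Lp)%N.
  under eq_bigr => s _ do rewrite /nn count_sumE.
  rewrite exchange_big /= -sum1_size !big_seq; apply: leq_sum => q qL.
  apply: leq_trans (sum_eq_le T (sgv q)); apply: leq_sum => s _.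
  case: (boolP (q \in closure (cell s))) => // /set_mem h.
  by rewrite (cl_sgv s q h (proj2 (proj1 (W_iff q) (WL q qL)))) eqxx.
have C : (4 * #|T| <= \sum_(s in T) (nn s + kk s))%N.
  rewrite mulnC -sum_nat_const; apply: leq_sum => s; exact: cnt.
have D : (m < #|T|)%N.
  apply: (@forest m T tp tm) => //.
  - by apply/set0Pn; exists (tp (Ordinal m1)).
  - by move=> i; rewrite !ffunE eqxx.
  - by move=> i j ji; rewrite !ffunE (negbTE ji).
rewrite big_split /= A in C.
have E := leq_trans C (leq_add B (leqnn (2 * m))).
have D2 : (4 * m.+1 <= 4 * #|T|)%N by rewrite leq_mul2l.
have F := leq_trans D2 E. clear -F.
lia.
Qed.

End S.

Theorem proposition7p1 (R : realType) (m : nat) (a b : 'I_m -> R * R)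
    (Lp : seq (R * R)) :
  (1 <= m)%N ->
  pinch_data a b ->
  boundary_link_points a b Lp ->
  (forall p, pinched_complement a b p ->
     let U0 := connected_component (pinched_complement a b) p in
     let k := comp_pinch_count a b U0 in
     let n := comp_link_count Lp U0 in
     [/\ n = k %[mod 2],
         k = 1%N -> (3 <= n)%N &
         k = 2%N -> (2 <= n)%N]) ->
  (2 * m + 4 <= size Lp)%N.
Proof.
move=> m1 hpd hL H.
exact: (@main R m a b hpd Lp m1 hL H).
Qed.
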